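(* For every tree $T=(V,E,w)$ with positive integer costs there exists an optimal extended strategy function $f$ for $T$ such that $|f(v)|=w(v)$ for every $v\in V$.
   Context: Intervals are of the form $[a,b)$ with integers $0\le a<b$, and $|[a,b)|=b-a$. For intervals $I=[a,b)$, $I'=[a',b')$ write $I>I'$ iff $a\ge b'$. An extended strategy function for $T$ is a map $f$ assigning to each vertex $v$ an interval $f(v)$ with $|f(v)|\ge w(v)$, such that for any distinct $v_1,v_2$ with $f(v_1)\cap f(v_2)\ne\emptyset$, the path between $v_1$ and $v_2$ contains a vertex $v_3$ with $f(v_3)>f(v_1)$ and $f(v_3)>f(v_2)$. An extended strategy function $f$ is optimal if $\sup\bigcup_{v\in V}f(v)$ is minimum among all extended strategy functions for $T$. *)

(* Defs.v *)
From mathcomp Require Import all_boot.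
Set Implicit Arguments. Unset Strict Implicit. Unset Printing Implicit Defensive.

(* A tree: connected and without cycles (a cycle = a duplicate-free closed
   walk on at least 3 vertices). *)
Definition connected_graph (T : finType) (e : rel T) : Prop :=
  forall x y : T, connect e x y.
Definition acyclic_graph (T : finType) (e : rel T) : Prop :=
  forall p : seq T, uniq p -> 3 <= size p -> ~~ cycle e p.
Definition is_tree (T : finType) (e : rel T) : Prop :=
  connected_graph e /\ acyclic_graph e.

Definition on_path (T : finType) (e : rel T) (x y z : T) : Prop :=
  exists p : seq T, [/\ path e x p, last x p = y, uniq (x :: p) & z \in x :: p].

(* Interval [a,b) encoded by the pair (a,b); valid iff a < b. *)
Definition interval := (nat * nat)%type.
Definition ivalid (I : interval) : bool := I.1 < I.2.
Definition ilen (I : interval) : nat := I.2 - I.1.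
Definition igt (I J : interval) : bool := J.2 <= I.1.
Definition ioverlap (I J : interval) : bool := (I.1 < J.2) && (J.1 < I.2).

Definition ext_strategy (T : finType) (e : rel T) (w : T -> nat)
    (f : T -> interval) : Prop :=
  [/\ forall v, ivalid (f v),
      forall v, w v <= ilen (f v) &
      forall v1 v2, v1 != v2 -> ioverlap (f v1) (f v2) ->
        exists v3, [/\ on_path e v1 v2 v3, igt (f v3) (f v1) & igt (f v3) (f v2)]].

(* sup of the union of the intervals [a,b): the largest right endpoint *)
Definition strategy_cost (T : finType) (f : T -> interval) : nat :=
  \max_(v : T) (f v).2.

Definition optimal_ext_strategy (T : finType) (e : rel T) (w : T -> nat)
    (f : T -> interval) : Prop :=
  ext_strategy e w f /\
  forall g, ext_strategy e w g -> strategy_cost f <= strategy_cost g.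

(* Main.v *)
Require Import Defs.
From mathcomp Require Import all_boot.
From mathcomp Require Import zify.
From Stdlib Require Import Classical.

Lemma exists_strat (T : finType) (e : rel T) (w : T -> nat) :
  exists g, ext_strategy e w g.
Proof.
set M := (\max_(v : T) w v).+1.
exists (fun v => (enum_rank v * M, enum_rank v * M + M)).
split.
- move=> v; rewrite /ivalid /=; lia.
- move=> v; rewrite /ilen /=.
  have := leq_bigmax v (F := w); rewrite -/M; lia.
- move=> v1 v2 ne; rewrite /ioverlap /= => /andP [h1 h2].
  exfalso.
  have : nat_of_ord (enum_rank v1) != nat_of_ord (enum_rank v2).
    apply/negP => /eqP /val_inj /enum_rank_inj E; by rewrite E eqxx in ne.
  move: h1 h2; set a := nat_of_ord _; set b := nat_of_ord _ => h1 h2 hab.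
  have : a < b \/ b < a by lia.
  case=> H.
  + have : a.+1 * M <= b * M by rewrite leq_mul2r H orbT.
    rewrite mulSn; lia.
  + have : b.+1 * M <= a * M by rewrite leq_mul2r H orbT.
    rewrite mulSn; lia.
Qed.

Lemma exists_opt (T : finType) (e : rel T) (w : T -> nat) :
  exists g, optimal_ext_strategy e w g.
Proof.
have [g0 Hg0] := exists_strat _ e w.
suff : forall n g, ext_strategy e w g -> strategy_cost g <= n ->
   exists g, optimal_ext_strategy e w g by move/(_ _ g0 Hg0 (leqnn _)).
elim=> [|n IH] g Hg Hc.
- exists g; split=> // g' _; move: Hc; rewrite leqn0 => /eqP ->; done.
- case: (classic (exists g', ext_strategy e w g' /\ strategy_cost g' < strategy_cost g)).
  + move=> [g' [H1 H2]]; apply: (IH g') => //; lia.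
  + move=> N; exists g; split=> // g' H'.
    rewrite leqNgt; apply/negP => lt; apply: N; by exists g'.
Qed.

Theorem mainTheorem11 (T : finType) (e : rel T) (w : T -> nat) :
  symmetric e -> irreflexive e -> is_tree e ->
  (forall v, 0 < w v) ->
  exists f : T -> interval,
    optimal_ext_strategy e w f /\ forall v, ilen (f v) = w v.
Proof.
move=> _ _ _ wpos.
have [g [[Hv Hl Hs] Ho]] := exists_opt _ e w.
have Hl' : forall v, (g v).1 <= (g v).2 - w v.
  move=> v; have := Hl v; have := Hv v; rewrite /ilen /ivalid; lia.
exists (fun v => ((g v).2 - w v, (g v).2)).
have Hc : strategy_cost (fun v => ((g v).2 - w v, (g v).2)) = strategy_cost g.
  by rewrite /strategy_cost; apply: eq_bigr.
split; last first.
  move=> v; rewrite /ilen /=; have := Hl v; rewrite /ilen; have := wpos v; lia.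
split; last by move=> g' H'; rewrite Hc; apply: Ho.
split.
- move=> v; rewrite /ivalid /=; have := Hl v; rewrite /ilen; have := wpos v; have := Hv v;
  rewrite /ivalid; lia.
- move=> v; rewrite /ilen /=; have := Hl v; rewrite /ilen; lia.
- move=> v1 v2 ne; rewrite /ioverlap /= => /andP [h1 h2].
  have [v3 [P3 G1 G2]] := Hs v1 v2 ne (ltac:(
    rewrite /ioverlap; apply/andP; split;
    [have := Hl' v1; lia | have := Hl' v2; lia])).
  exists v3; split => //; rewrite /igt /=; move: G1 G2; rewrite /igt;
  have := Hl' v3; lia.
Qed.
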